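(* Let $n\ge 3$ be an integer and $D_{2n}=\langle a,x\mid a^n=e,\ x^2=e,\ xax=a^{-1}\rangle$. For $m\mid n$ let $A_m=\langle a^{n/m}\rangle\simeq\mathbb{Z}_m$, and for $m\mid n$ and $r\in\mathbb{Z}_{n/m}$ (identified with an integer in $\{0,\dots,\tfrac nm-1\}$) let $B_{2m,r}=\langle a^{n/m},a^rx\rangle\simeq D_{2m}$. Then: (1) If $m\mid n$ and $\gcd(m,\tfrac nm)=1$, then $D_{2n}$ is the internal semidirect product $D_{2n}=A_m\rtimes B_{2n/m,r}$ for every $r\in\mathbb{Z}_m$. (2) If $n$ is even, then $D_{2n}=B_{n,0}\rtimes B_{2,r_1}=B_{n,1}\rtimes B_{2,r_0}$ for all $r_0,r_1\in\mathbb{Z}_n$ with $r_i\equiv i\pmod 2$. (3) If $2\mid n$ and $4\nmid n$, then $D_{2n}=B_{n,0}\times A_2$ and $D_{2n}=B_{n,1}\times A_2$ (internal direct products). (4) There are no other internal semidirect decompositions $D_{2n}=X\rtimes Y$ (with $X,Y$ nontrivial subgroups) than those listed in (1)–(3).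
   Context: A group $G$ is the internal semidirect product $X\rtimes Y$ of subgroups $X,Y$ if $X$ is normal in $G$, $G=XY$ and $X\cap Y=\{e\}$; an internal direct product is the case where both are normal. Powers $a^r$ with $r$ a residue mean $a$ raised to the least nonnegative representative of $r$. *)

(* Defs.v *)
From mathcomp Require Import all_boot all_fingroup.
Set Implicit Arguments. Unset Strict Implicit. Unset Printing Implicit Defensive.
Local Open Scope group_scope.

Definition is_dihedral_pres (gT : finGroupType) (n : nat) (G : {set gT}) (a x : gT) :=
  [/\ G = <<[set a; x]>>, a ^+ n = 1, x ^+ 2 = 1, x * a * x = a^-1
    & #|G| = (2 * n)%N].

Definition Agrp (gT : finGroupType) (n : nat) (a : gT) (m : nat) : {group gT} :=
  <[a ^+ (n %/ m)]>%G.

Definition Bgrp (gT : finGroupType) (n : nat) (a x : gT) (m r : nat) : {group gT} :=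
  <<[set a ^+ (n %/ m); (a ^+ r * x)%g]>>%G.

(* Main.v *)
Require Import Defs.
From mathcomp Require Import all_boot all_fingroup all_solvable zify.
Set Implicit Arguments. Unset Strict Implicit. Unset Printing Implicit Defensive.
Local Open Scope group_scope.

Section Dih.
Variables (gT : finGroupType) (n : nat) (G : {group gT}) (a x : gT).
Hypothesis n3 : (3 <= n)%N.
Hypothesis HD : is_dihedral_pres n G a x.

Lemma defG : G :=: <[a]> <*> <[x]>.
Proof. by case: HD => -> *; rewrite joing_idl joing_idr. Qed.
Lemma an1 : a ^+ n = 1. Proof. by case: HD. Qed.
Lemma xx : x * x = 1. Proof. by case: HD => _ _ <- *; rewrite expgS expg1. Qed.
Lemma xax : x * a * x = a^-1. Proof. by case: HD. Qed.
Lemma cardG : #|G| = (2*n)%N. Proof. by case: HD. Qed.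

Lemma xV : x^-1 = x.
Proof. by apply/eqP; rewrite eq_invg_mul xx. Qed.

Lemma xa : x * a = a^-1 * x.
Proof. by rewrite -xax -mulgA xx mulg1. Qed.

Lemma xai i : x * a ^+ i = a ^- i * x.
Proof.
elim: i => [|i IH]; first by rewrite !expg0 invg1 mulg1 mul1g.
by rewrite {1}expgS mulgA xa -mulgA IH expgSr invMg !mulgA.
Qed.

Lemma conj_xi i : (a ^+ i) ^ x = a ^- i.
Proof. by rewrite conjgE xV mulgA xai -mulgA xx mulg1. Qed.

Lemma conj_ai i j : (a ^+ i) ^ (a ^+ j) = a ^+ i.
Proof. by rewrite conjgE (commuteX2 i j (commute_refl a)) mulKg. Qed.

Lemma conj_yi r i : (a ^+ i) ^ (a ^+ r * x) = a ^- i.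
Proof. by rewrite conjgM conj_ai conj_xi. Qed.

Lemma yy r : (a ^+ r * x) * (a ^+ r * x) = 1.
Proof. by rewrite mulgA -(mulgA _ x) xai mulgA mulgV mul1g xx. Qed.

Lemma aG : a \in G.
Proof. by rewrite defG mem_gen // inE cycle_id. Qed.
Lemma xG : x \in G.
Proof. by rewrite defG mem_gen // inE cycle_id orbT. Qed.
Lemma aiG i : a ^+ i \in G. Proof. by rewrite groupX // aG. Qed.
Lemma yG r : a ^+ r * x \in G. Proof. by rewrite groupM ?aiG ?xG. Qed.
Lemma CG : <[a]> \subset G. Proof. by rewrite cycle_subG aG. Qed.

Lemma normC k : G \subset 'N(<[a ^+ k]>).
Proof.
rewrite defG join_subG !cycle_subG -!cycle_subG !norms_cycle.
rewrite conj_xi groupV cycle_id andbT.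
by rewrite conjgE -(commuteX k (commute_refl a)) mulKg cycle_id.
Qed.

Lemma GE : G :=: <[a]> * <[x]>.
Proof.
rewrite defG norm_joinEr //; apply: subset_trans (normC 1).
by rewrite cycle_subG xG.
Qed.

Lemma ord_facts : #[a] = n /\ x \notin <[a]> /\ #[x] = 2.
Proof.
have n0 : (0 < n)%N by lia.
have da : (#[a] <= n)%N by apply: dvdn_leq => //; rewrite order_dvdn an1.
have dx : (#[x] <= 2)%N by apply: dvdn_leq => //; rewrite order_dvdn expgS expg1 xx.
have := mul_cardG <[a]> <[x]>; rewrite -GE cardG.
have : (0 < #|<[a]> :&: <[x]>|)%N by apply/card_gt0P; exists 1; rewrite group1.
move: (#|_ :&: _|) => t t0 E.
change (#[a] * #[x] = 2 * n * t)%N in E.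
have le2 : (#[a] * #[x] <= n * 2)%N by apply: leq_mul.
have t1 : t = 1%N by nia.
subst t.
have xa0 : (0 < #[x])%N by apply: order_gt0.
have -> : #[a] = n by nia.
have -> : #[x] = 2 by nia.
split=> //; split=> //; apply/negP => xC.
have : G \subset <[a]> by rewrite GE mul_subG // cycle_subG.
move/subset_leq_card; rewrite cardG; change #|<[a]>| with #[a]; lia.
Qed.

Lemma ordA : #[a] = n. Proof. by case: ord_facts. Qed.
Lemma xNC : x \notin <[a]>. Proof. by case: ord_facts => _ []. Qed.
Lemma ordx : #[x] = 2. Proof. by case: ord_facts => _ []. Qed.
Lemma cardC : #|<[a]>| = n. Proof. exact: ordA. Qed.


Lemma n0 : (0 < n)%N. Proof. lia. Qed.

Lemma yNC r : a ^+ r * x \notin <[a]>.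
Proof.
apply: contra xNC => yC.
have -> : x = (a ^+ r)^-1 * (a ^+ r * x) by rewrite mulKg.
by rewrite groupM ?groupV ?mem_cycle.
Qed.

Lemma notC_form g : g \in G -> g \notin <[a]> -> exists i, g = a ^+ i * x.
Proof.
rewrite GE => /mulsgP [c e cC eX ->].
rewrite (cycle2g ordx) !inE in eX.
case/orP: eX => /eqP ->; first by rewrite mulg1 cC.
by case/cycleP: cC => i ->; exists i.
Qed.

Lemma mulNC g h : g \in G -> h \in G -> g \notin <[a]> -> h \notin <[a]> ->
  g * h^-1 \in <[a]>.
Proof.
move=> gG hG gC hC; case: (notC_form gG gC) => i ->.
case: (notC_form hG hC) => j ->.
by rewrite invMg xV mulgA -(mulgA (a ^+ i)) xx mulg1 groupM ?groupV ?mem_cycle.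
Qed.

Lemma Hsize (H : {group gT}) y : H \subset G -> y \in H -> y \notin <[a]> ->
  #|H| = (2 * #|H :&: <[a]>|)%N.
Proof.
move=> sHG yH yC.
have le : (#|H| <= 2 * #|H :&: <[a]>|)%N.
  have : H \subset (H :&: <[a]>) :|: ((H :&: <[a]>) :* y).
    apply/subsetP => h hH; rewrite inE.
    case hC: (h \in <[a]>); first by rewrite inE hH hC.
    apply/orP; right; rewrite mem_rcoset inE groupM ?groupV //.
    by rewrite mulNC ?(subsetP sHG) ?hC.
  move/subset_leq_card; rewrite cardsU card_rcoset => HH.
  by apply: (leq_trans HH); apply: (leq_trans (leq_subr _ _)); rewrite addnn mul2n.
have dv : #|H :&: <[a]>| %| #|H| by apply: cardSg; apply: subsetIl.
have pos : (0 < #|H :&: <[a]>|)%N by apply/card_gt0P; exists 1; rewrite group1.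
have ne : #|H :&: <[a]>| != #|H|.
  apply: contraNneq yC => E.
  have : H :&: <[a]> == H by rewrite eqEcard subsetIl E leqnn.
  by move/eqP => HE; move: yH; rewrite -HE inE => /andP [].
have Hp : (0 < #|H|)%N by apply/card_gt0P; exists 1; rewrite group1.
move: dv le ne pos Hp; move: #|H :&: <[a]>| => c /dvdnP [k ->] le ne pos Hp.
rewrite leq_pmul2r // in le.
case: k le ne Hp => [|[|[|k]]] //=; rewrite ?mul1n ?eqxx //.
Qed.

Lemma BgrpE j r : Bgrp n a x j r :=: <[a ^+ (n %/ j)]> * <[a ^+ r * x]>.
Proof.
rewrite /Bgrp /=.
have -> : <<[set a ^+ (n %/ j); a ^+ r * x]>> = <[a ^+ (n %/ j)]> <*> <[a ^+ r * x]>
  by rewrite joing_idl joing_idr.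
by apply: norm_joinEr; rewrite norms_cycle conj_yi groupV cycle_id.
Qed.

Lemma ordy r : #[a ^+ r * x] = 2.
Proof.
have d : (#[a ^+ r * x] <= 2)%N.
  by apply: dvdn_leq => //; rewrite order_dvdn expgS expg1 yy.
have ne : #[a ^+ r * x] != 1%N.
  rewrite order_eq1; apply: contra (yNC r) => /eqP ->; exact: group1.
have := order_gt0 (a ^+ r * x); lia.
Qed.

Lemma TIy r (K : {group gT}) : K \subset <[a]> -> <[a ^+ r * x]> :&: K = 1.
Proof.
move=> sK; apply: prime_TIg.
  by change (prime #[a ^+ r * x]); rewrite ordy.
rewrite cycle_subG; apply: contra (yNC r); exact: (subsetP sK).
Qed.

Lemma cardB j r : #|Bgrp n a x j r| = (2 * #[a ^+ (n %/ j)])%N.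
Proof.
rewrite BgrpE TI_cardMg; first by change (#[a ^+ (n %/ j)] * #[a ^+ r * x] = 2 * #[a ^+ (n %/ j)])%N; rewrite ordy mulnC.
by rewrite setIC TIy // cycleX.
Qed.

Lemma BC j r : Bgrp n a x j r :&: <[a]> = <[a ^+ (n %/ j)]>.
Proof.
by rewrite BgrpE -group_modl ?cycleX // TIy ?subxx // mulg1.
Qed.

Lemma BG j r : Bgrp n a x j r \subset G.
Proof. by rewrite BgrpE mul_subG // cycle_subG ?aiG ?yG. Qed.

Lemma red (H : {group gT}) k r : a ^+ k \in H -> a ^+ r * x \in H ->
  a ^+ (r %% k) * x \in H.
Proof.
move=> kH yH.
have E : a ^+ r * x = (a ^+ k) ^+ (r %/ k) * (a ^+ (r %% k) * x).
  by rewrite mulgA -expgM -expgD mulnC -divn_eq.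
rewrite -[a ^+ (r %% k) * x](mulKg ((a ^+ k) ^+ (r %/ k))) -E.
by rewrite groupM // groupV groupX.
Qed.

Lemma memB_rot j k : k %| n -> a ^+ j \in <[a ^+ k]> -> k %| j.
Proof.
move=> kn /cycleP [i /eqP]; rewrite -expgM eq_expg_mod_order ordA => /eqP E.
have := congr1 (modn^~ k) E; rewrite /= !modn_dvdm // modnMr => H.
by rewrite /dvdn H.
Qed.

Lemma memB_ref j k s : k %| n ->
  a ^+ j * x \in <[a ^+ k]> * <[a ^+ s * x]> -> j %% k = s %% k.
Proof.
move=> kn /mulsgP [c e cK]; rewrite (cycle2g (ordy s)) !inE => /orP [] /eqP -> E.
  rewrite mulg1 in E; rewrite -E in cK.
  by have := yNC j; rewrite (subsetP (cycleX a k) _ cK).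
case/cycleP: cK E => i ->; rewrite mulgA => /mulIg /eqP.
rewrite -expgM -expgD eq_expg_mod_order ordA => /eqP E.
have := congr1 (modn^~ k) E; rewrite /= !modn_dvdm // mulnC modnMDl.
done.
Qed.

Lemma kdiv m : m %| n -> n %/ (n %/ m) = m.
Proof.
move=> /dvdnP [q nE].
have q0 : (0 < q)%N by have := n0; rewrite nE; case: q {nE} => //.
have m0 : (0 < m)%N by have := n0; rewrite nE; case: m {nE} => //; rewrite muln0.
by rewrite nE mulnK // mulKn.
Qed.


Lemma ordXd k : k %| n -> #[a ^+ k] = n %/ k.
Proof. by move=> kn; rewrite orderXdiv ordA. Qed.

Lemma divdv m : m %| n -> n %/ m %| n.
Proof. by move=> mn; rewrite -{2}(divnK mn) dvdn_mulr. Qed.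

Lemma part1 m r : m %| n -> coprime m (n %/ m) -> (r < m)%N ->
  Agrp n a m ><| Bgrp n a x (n %/ m) r = G.
Proof.
move=> mn cop rm.
have oA : #|Agrp n a m| = m.
  by rewrite /Agrp /=; change (#[a ^+ (n %/ m)] = m); rewrite ordXd ?divdv ?kdiv.
have oB : #|Bgrp n a x (n %/ m) r| = (2 * (n %/ m))%N by rewrite cardB kdiv // ordXd.
have TI : Agrp n a m :&: Bgrp n a x (n %/ m) r = 1.
  have T0 : Agrp n a m :&: <[a ^+ m]> = 1.
    apply: coprime_TIg; rewrite oA.
    by change (coprime m #[a ^+ m]); rewrite ordXd.
  apply/trivgP; rewrite -T0; apply/subsetP => z; rewrite !inE => /andP [zA zB].
  rewrite zA /= -[m in <[a ^+ m]>](kdiv mn) -(BC (n %/ m) r) inE zB.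
  exact: (subsetP (cycleX a _) z zA).
apply/eqP; rewrite sdprodE ?(subset_trans (BG _ _) (normC _)) //; last first.
rewrite eqEcard mul_subG ?BG ?cycle_subG ?aiG //= TI_cardMg // oA oB cardG.
have := divnK mn; move: (n %/ m) => q E; rewrite -E; nia.
Qed.


Lemma Y1E r : Bgrp n a x 1 r :=: <[a ^+ r * x]>.
Proof. by rewrite BgrpE divn1 an1 cycle1 mul1g. Qed.

Lemma cardB2 s : ~~ odd n -> #|Bgrp n a x (n %/ 2) s| = n.
Proof.
move=> ev; have n2 : 2 %| n by rewrite dvdn2.
by rewrite cardB kdiv // ordXd // mulnC divnK.
Qed.

Lemma B2E s : ~~ odd n -> Bgrp n a x (n %/ 2) s :=: <[a ^+ 2]> * <[a ^+ s * x]>.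
Proof. by move=> ev; rewrite BgrpE kdiv // dvdn2. Qed.

Lemma B2normal s : ~~ odd n -> G \subset 'N(Bgrp n a x (n %/ 2) s).
Proof.
move=> ev; apply: normal_norm; apply: index2_normal; first exact: BG.
have := Lagrange (BG (n %/ 2) s); rewrite cardB2 // cardG => E.
have := n0; nia.
Qed.

Lemma part2 s r : ~~ odd n -> r %% 2 != s %% 2 ->
  Bgrp n a x (n %/ 2) s ><| Bgrp n a x 1 r = G.
Proof.
move=> ev rs.
have TI : Bgrp n a x (n %/ 2) s :&: Bgrp n a x 1 r = 1.
  rewrite setIC Y1E; apply: prime_TIg.
    by change (prime #[a ^+ r * x]); rewrite ordy.
  rewrite cycle_subG B2E //; apply: contra rs => /memB_ref -> //.
  by rewrite dvdn2.
apply/eqP; rewrite sdprodE ?(subset_trans (BG _ _) (B2normal _ _)) //.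
rewrite eqEcard mul_subG ?BG //= TI_cardMg // cardB2 // Y1E.
by rewrite cardG; change (2 * n <= n * #[a ^+ r * x])%N; rewrite ordy mulnC.
Qed.

Lemma part3 s : 2 %| n -> ~~ (4 %| n) ->
  Bgrp n a x (n %/ 2) s \x Agrp n a 2 = G.
Proof.
move=> n2 n4; have ev : ~~ odd n by rewrite -dvdn2.
set z := a ^+ (n %/ 2).
have zz : z * z = 1 by rewrite /z -expgD addnn -mul2n mulnC divnK // an1.
have zV : z^-1 = z by apply/eqP; rewrite eq_invg_mul zz.
have Gc : G \subset 'C[z].
  rewrite defG join_subG !cycle_subG; apply/andP; split; apply/cent1P.
    exact: commuteX.
  by rewrite /commute /z xai -/z zV.
have oz : #[z] = 2 by rewrite /z ordXd ?divdv ?kdiv.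
have TI : Bgrp n a x (n %/ 2) s :&: Agrp n a 2 = 1.
  rewrite setIC; apply: prime_TIg.
    by rewrite /Agrp /=; change (prime #[z]); rewrite oz.
  rewrite /Agrp /= cycle_subG; apply/negP => zB.
  have : z \in <[a ^+ 2]>.
    by rewrite -[X in <[a ^+ X]>](kdiv n2) -(BC (n %/ 2) s) inE zB mem_cycle.
  move/memB_rot => /(_ n2) d; apply: (negP n4).
  by rewrite -(divnK n2) (_ : 4 = 2 * 2)%N // dvdn_pmul2r.
apply/eqP; rewrite dprodE //; last first.
  by rewrite /Agrp /= cycle_subG -sub_cent1 (subset_trans (BG _ _) Gc).
rewrite eqEcard mul_subG ?BG ?cycle_subG ?aiG //= TI_cardMg // cardB2 //.
by rewrite /Agrp /= cardG; change (2 * n <= n * #[z])%N; rewrite oz mulnC.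
Qed.


Lemma csub (H : {group gT}) : H \subset <[a]> -> H :=: <[a ^+ (n %/ #|H|)]>.
Proof.
move=> HC; have d : #|H| %| #[a] by apply: cardSg.
have := cycle_sub_group d; move/setP/(_ H); rewrite !inE HC eqxx /= ordA.
by move=> /esym /eqP E; rewrite {1}E.
Qed.

Lemma part4a (X Y : {group gT}) : X * Y = G -> X :&: Y = 1 -> Y \subset G ->
  X \subset <[a]> ->
  exists m r : nat, [/\ (m %| n)%N, coprime m (n %/ m), (r < m)%N,
                            X :=: Agrp n a m & Y :=: Bgrp n a x (n %/ m) r].
Proof.
move=> XY TI sYG XC.
have cXY : (#|X| * #|Y| = 2 * n)%N by rewrite -TI_cardMg // XY cardG.
have : ~~ (Y \subset <[a]>).
  apply/negP => YC; have : G \subset <[a]> by rewrite -XY mul_subG.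
  move/subset_leq_card; rewrite cardG cardC; have := n0; lia.
case/subsetPn => y yY yC; case: (notC_form (subsetP sYG y yY) yC) => r0 yE.
rewrite yE in yY yC.
set m := #|X|.
have mn : m %| n by rewrite -cardC; apply: cardSg.
have m0 : (0 < m)%N by apply: dvdn_gt0 mn; exact: n0.
have XE : X :=: <[a ^+ (n %/ m)]> by apply: csub.
have oY : #|Y| = (2 * (n %/ m))%N.
  apply/eqP; rewrite -(eqn_pmul2l m0) cXY; apply/eqP.
  have := divnK mn; move: (n %/ m) => q E; rewrite -{1}E; nia.
have oYC : #|Y :&: <[a]>| = n %/ m.
  by have := Hsize sYG yY yC; rewrite oY => /eqP; rewrite eqn_pmul2l // => /eqP.
have YCE : Y :&: <[a]> = <[a ^+ m]>.
  have := csub (subsetIr Y <[a]>); rewrite /= oYC kdiv //.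
have amY : a ^+ m \in Y.
  by have := cycle_id (a ^+ m); rewrite -YCE inE => /andP [].
have rY := red amY yY.
have YB : Y :=: Bgrp n a x (n %/ m) (r0 %% m).
  apply/eqP; rewrite eq_sym eqEcard /Bgrp /= gen_subG subUset !sub1set kdiv //.
  rewrite amY rY /=.
  have := cardB (n %/ m) (r0 %% m); rewrite /Bgrp /= kdiv // => ->.
  by rewrite ordXd // oY.
have TI' : X :&: <[a ^+ m]> = 1.
  apply/trivgP; rewrite -TI; have := subsetIl Y <[a]>; rewrite YCE; exact: setIS.
have cop : coprime m (n %/ m).
  set q := n %/ m; set g := gcdn m q.
  have nE : n = (q * m)%N by rewrite divnK.
  have g0 : (0 < g)%N by rewrite gcdn_gt0 m0.
  have q0 : (0 < q)%N by have := n0; rewrite nE; case: (q).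
  case/dvdnP: (dvdn_gcdl m q) => m' me.
  case/dvdnP: (dvdn_gcdr m q) => q' qe.
  rewrite -/g in me qe.
  have m'0 : (0 < m')%N by move: m0; rewrite me; case: (m').
  set z := (a ^+ q) ^+ m'.
  have zX : z \in X by rewrite XE mem_cycle.
  have zm : z \in <[a ^+ m]>.
    have -> : z = (a ^+ m) ^+ q'.
      by rewrite /z -!expgM; congr (_ ^+ _); rewrite me qe; nia.
    exact: mem_cycle.
  have : z \in X :&: <[a ^+ m]> by rewrite inE zX.
  rewrite TI' inE /z -expgM -order_dvdn ordA nE => d.
  have qm0 : (0 < q * m')%N by rewrite muln_gt0 q0 m'0.
  have le := dvdn_leq qm0 d.
  rewrite me leq_pmul2l // -{2}(muln1 m') leq_pmul2l // in le.
  rewrite /coprime -/g; apply/eqP; lia.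
exists m, (r0 %% m); split=> //; first exact: ltn_pmod.
Qed.


Lemma conj_ya r : (a ^+ r * x) ^ a = (a ^+ 2)^-1 * (a ^+ r * x).
Proof.
rewrite conjgE -mulgA xa expgS expg1 invMg -mulgA; congr (_ * _).
by rewrite !mulgA (commuteV (commute_sym (commuteX r (commute_refl a)))).
Qed.

Lemma part4b (X Y : {group gT}) : X <| G -> X * Y = G -> X :&: Y = 1 ->
  Y \subset G -> Y :!=: 1 -> ~~ (X \subset <[a]>) ->
     (~~ odd n /\
         ((X :=: Bgrp n a x (n %/ 2) 0 /\
             exists r1, [/\ (r1 < n)%N, odd r1 & Y :=: Bgrp n a x 1 r1])
          \/ (X :=: Bgrp n a x (n %/ 2) 1 /\
             exists r0, [/\ (r0 < n)%N, ~~ odd r0 & Y :=: Bgrp n a x 1 r0])))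
     \/ ([/\ (2 %| n)%N, ~~ (4 %| n)%N,
            X :=: Bgrp n a x (n %/ 2) 0 \/ X :=: Bgrp n a x (n %/ 2) 1
          & Y :=: Agrp n a 2]).
Proof.
move=> nXG XY TI sYG Y1 XC.
have sXG := normal_sub nXG.
have cXY : (#|X| * #|Y| = 2 * n)%N by rewrite -TI_cardMg // XY cardG.
case/subsetPn: XC => y0 y0X y0C.
case: (notC_form (subsetP sXG y0 y0X) y0C) => r y0E.
rewrite y0E in y0X y0C.
have a2X : a ^+ 2 \in X.
  have aN : a \in 'N(X) := subsetP (normal_norm nXG) a aG.
  have := memJ_norm (a ^+ r * x) aN; rewrite y0X conj_ya => h.
  have : ((a ^+ 2)^-1 * (a ^+ r * x)) * (a ^+ r * x)^-1 \in X.
    by rewrite groupM ?groupV.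
  by rewrite mulgK groupV.
have oX := Hsize sXG y0X y0C.
have cn : #|X :&: <[a]>| %| n by rewrite -cardC; apply: cardSg; apply: subsetIr.
have dc : #[a ^+ 2] %| #|X :&: <[a]>|.
  by apply: cardSg; rewrite subsetI cycle_subG a2X cycleX.
have c0 : (0 < #|X :&: <[a]>|)%N by apply/card_gt0P; exists 1; rewrite group1.
move: oX cn dc c0; move: #|X :&: <[a]>| => c oX cn dc c0.
have cne : c != n.
  apply/negP => /eqP cE; move: cXY; rewrite oX cE => E.
  have : #|Y| = 1%N by have := n0; nia.
  by move/eqP; rewrite -trivg_card1 (negPf Y1).
have ev : ~~ odd n.
  apply/negP => od.
  have : #[a ^+ 2] = n.
    by rewrite orderXgcd ordA; move: od; rewrite -coprimen2 /coprime => /eqP ->; rewrite divn1.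
  move=> E; rewrite E in dc; move: cne; rewrite eqn_dvd dc cn //.
have n2 : 2 %| n by rewrite dvdn2.
have h2 : n = (2 * (n %/ 2))%N by rewrite mulnC divnK.
have cE : c = n %/ 2.
  rewrite ordXd // in dc; case/dvdnP: dc => t ct.
  have hp : (0 < n %/ 2)%N by lia.
  rewrite ct {2}h2 dvdn_pmul2r // in cn.
  have : (t <= 2)%N by apply: dvdn_leq.
  rewrite ct in cne c0 *.
  case: t {ct cn} cne c0 => [|[|[|t]]] //=; rewrite ?mul1n //.
  by move=> /negP; rewrite -h2.
have oXn : #|X| = n by rewrite oX cE -h2.
have oY : #|Y| = 2%N.
  by move: cXY; rewrite oXn => E; have := n0; nia.
move sE : (r %% 2) => s.
have sX : a ^+ s * x \in X by rewrite -sE; apply: red.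
have XB : X :=: Bgrp n a x (n %/ 2) s.
  apply/eqP; rewrite eq_sym eqEcard cardB2 // oXn leqnn andbT.
  by rewrite /Bgrp /= gen_subG subUset !sub1set kdiv // a2X sX.
have s2 : (s < 2)%N by rewrite -sE ltn_pmod.
case/trivgPn: Y1 => y yY y1.
have oy : #[y] = 2%N.
  have : (#[y] <= #|Y|)%N by apply: dvdn_leq; [rewrite oY | exact: order_dvdG].
  rewrite oY.
  have := order_gt0 y; move: y1; rewrite -order_eq1; lia.
have YE : Y :=: <[y]>.
  apply/eqP; rewrite eq_sym eqEcard cycle_subG yY /=.
  by change (#|Y| <= #[y])%N; rewrite oy oY.
case yC: (y \in <[a]>).
  right.
  have := csub (H := <[y]>%G); rewrite /= cycle_subG yC => /(_ isT) E.
  have YA : Y :=: Agrp n a 2.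
    by rewrite YE E /Agrp /=; change #|<[y]>| with #[y]; rewrite oy.
  have n4 : ~~ (4 %| n).
    apply/negP => /dvdnP [k nk].
    have hk : n %/ 2 = (2 * k)%N.
      by rewrite nk (_ : 4 = 2 * 2)%N // mulnA mulnK // mulnC.
    have zX : a ^+ (n %/ 2) \in X by rewrite hk expgM groupX.
    have zY : a ^+ (n %/ 2) \in Y by rewrite YA /Agrp /= cycle_id.
    have : a ^+ (n %/ 2) \in X :&: Y by rewrite inE zX.
    rewrite TI inE -order_eq1 ordXd ?divdv // kdiv //.
  split=> //.
  by case: s sX XB s2 {sE} => [|[|]] //= _ XB _; [left | right].
left; split=> //.
case: (notC_form (subsetP sYG y yY) (negbT yC)) => i yE.
have yE' : y = a ^+ (i %% n) * x by rewrite yE -(expg_mod_order a i) ordA.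
have jn : (i %% n < n)%N by rewrite ltn_pmod // n0.
have YB : Y :=: Bgrp n a x 1 (i %% n) by rewrite Y1E YE yE'.
have js : (i %% n) %% 2 != s.
  apply/negP => /eqP js.
  have : y \in X.
    rewrite XB B2E // yE'.
    have -> : a ^+ (i %% n) * x = (a ^+ 2) ^+ ((i %% n) %/ 2) * (a ^+ s * x).
      by rewrite mulgA -expgM -expgD mulnC -js -divn_eq.
    by rewrite mem_mulg ?mem_cycle ?cycle_id.
  move=> yX; have : y \in X :&: Y by rewrite inE yX.
  by rewrite TI inE (negPf y1).
rewrite modn2 in js.
case: s sX XB s2 js {sE} => [|[|]] //= _ XB _ js.
  left; split=> //; exists (i %% n); split=> //.
  by move: js; case: (odd _).
right; split=> //; exists (i %% n); split=> //.
by move: js; case: (odd _).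
Qed.

End Dih.

Theorem mainTheorem5 (gT : finGroupType) (n : nat) (G : {group gT}) (a x : gT) :
  (3 <= n)%N -> is_dihedral_pres n G a x ->
  (* (1) *)
  (forall m r : nat, (m %| n)%N -> coprime m (n %/ m) -> (r < m)%N ->
     Agrp n a m ><| Bgrp n a x (n %/ m) r = G)
  /\
  (* (2) *)
  (~~ odd n ->
     forall r0 r1 : nat, (r0 < n)%N -> (r1 < n)%N -> ~~ odd r0 -> odd r1 ->
       Bgrp n a x (n %/ 2) 0 ><| Bgrp n a x 1 r1 = G /\
       Bgrp n a x (n %/ 2) 1 ><| Bgrp n a x 1 r0 = G)
  /\
  (* (3) *)
  ((2 %| n)%N -> ~~ (4 %| n)%N ->
     Bgrp n a x (n %/ 2) 0 \x Agrp n a 2 = G /\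
     Bgrp n a x (n %/ 2) 1 \x Agrp n a 2 = G)
  /\
  (* (4) *)
  (forall X Y : {group gT}, X ><| Y = G -> X :!=: 1 -> Y :!=: 1 ->
     (exists m r : nat, [/\ (m %| n)%N, coprime m (n %/ m), (r < m)%N,
                            X :=: Agrp n a m & Y :=: Bgrp n a x (n %/ m) r])
     \/ (~~ odd n /\
         ((X :=: Bgrp n a x (n %/ 2) 0 /\
             exists r1, [/\ (r1 < n)%N, odd r1 & Y :=: Bgrp n a x 1 r1])
          \/ (X :=: Bgrp n a x (n %/ 2) 1 /\
             exists r0, [/\ (r0 < n)%N, ~~ odd r0 & Y :=: Bgrp n a x 1 r0])))
     \/ ([/\ (2 %| n)%N, ~~ (4 %| n)%N,
            X :=: Bgrp n a x (n %/ 2) 0 \/ X :=: Bgrp n a x (n %/ 2) 1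
          & Y :=: Agrp n a 2])).
Proof.
move=> n3 HD.
split; first by move=> m r; exact: part1.
split.
  move=> ev r0 r1 _ _ e0 o1; split; apply: part2 => //.
    by rewrite !modn2 o1.
  by rewrite !modn2 (negPf e0).
split; first by move=> n2 n4; split; apply: part3.
move=> X Y sd X1 Y1.
case/sdprod_context: (sd) => nXG sYG XY nYX TI.
case: (boolP (X \subset <[a]>)) => XC.
  by left; apply: (part4a n3 HD XY TI sYG XC).
by right; apply: (part4b n3 HD nXG XY TI sYG Y1 XC).
Qed.
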